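(* Let $\psi$ be a colouring, let $d\in\mathbb Z$, write $d^+=\max(d,0)$, and let $\xi\in\mathcal C_{d^+}$ be regular and summable. Then the series $\sum_{a\ge d^+}(X^-)^{a-d}(X^+)^a\xi^a(H)$ converges, for the $h$-adic topology, to a unique element $x\in U_h(\psi)$. Moreover $x$ is of degree $d$, and $\psi\ltimes\xi=\psi(x)$.
   Context: $\mathbb k$ is a field of characteristic zero, and $\mathbb k[[h]]$ is the ring of formal power series over $\mathbb k$. For a $\mathbb k$-vector space $V_0$, $V_0[[h]]$ denotes the module of formal series $\sum_{m\ge0}v_mh^m$ with $v_m\in V_0$. $\mathfrak a$ is the Lie algebra over $\mathbb k$ generated by $H,X^-,X^+$ subject to $[H,X^\pm]=\pm2X^\pm$. We set $U_h(\mathfrak a):=U(\mathfrak a)[[h]]$. A colouring is a sequence $\psi=(\psi^k)_{k\ge1}$ of functions $\psi^k:\mathbb Z\to\mathbb k[[h]]$ satisfying: - (C1) $\psi^k(n)\equiv k(n-k+1)\bmod h$; - (C2) $\psi^{n+1}(n)=0$ for all $n\ge0$; - (C3) $\psi^{n+k+1}(n)=\psi^k(-n-2)$ for all $k\ge1$ and all $n\ge0$. $V_h(n,\psi)$ is the representation of $U_h(\mathfrak a)$ on $(\bigoplus_{k\ge0}\mathbb k b_k)[[h]]$ with the following action: - $H.b_k=(n-2k)b_k$; - $X^-.b_k=b_{k+1}$; - $X^+.b_0=0$, and $X^+.b_k=\psi^k(n)b_{k-1}$ for $k\ge1$. $U_h(\psi)$ is the quotient of $U_h(\mathfrak a)$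 by the two-sided ideal of elements that act by zero on $V_h(n,\psi)$ for every $n\in\mathbb Z$. Sequences. For $d\in\mathbb N$, $\mathcal C_d$ is the $\mathbb k[[h]]$-module of sequences $f=(f^k)_{k\ge d}$ of functions $f^k:\mathbb Z\to\mathbb k[[h]]$. We write $f^k(n)=\sum_{m\ge0}f^k_m(n)h^m$ with $f^k_m:\mathbb Z\to\mathbb k$. - $f$ is summable if $f^k\to0$ $h$-adically, i.e. for each $m$ one has $f^k_m\equiv0$ for all sufficiently large $k$. - $f$ is regular if each $f^k_m$ is (the restriction of) a polynomial function of $n$, and for each $m$ the degree of $f^k_m$ is bounded independently of $k$. - For a regular $\xi$, set $\xi^a(H):=\sum_m\xi^a_m(H)h^m\in\mathbb k[H][[h]]$, viewed in $U_h(\psi)$. For a colouring $\psi$ and $\xi\in\mathcal C_d$ with $d\ge0$, define $\psi\ltimes\xi\in\mathcal C_d$ by $$(\psi\ltimes\xi)^k(n)=\sum_{a=d}^k\Big(\prod_{b=k-a+1}^k\psi^b(n)\Big)\xi^a(n-2k)\qquad(k\ge d),$$ where the empty product is $1$. Degree. An element $x\in U_h(\psi)$ is of degree $d\in\mathbb Z$ if, for every $n\in\mathbb Z$, two conditions hold in $V_h(n,\psi)$: - $x.b_k=0$ for $0\le k<d^+$; - $x.b_k=\psi(x)^k(n)\,b_{k-d}$ for some $\psi(x)^k(n)\in\mathbb k[[h]]$, for every $k\ge d^+$. In that case $\psi(x):=(\psi(x)^k)_{k\ge d^+}\in\mathcal C_{d^+}$. *)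

(* Defs.v *)
From HB Require Import structures.
From mathcomp Require Import all_boot all_order all_algebra.
Set Implicit Arguments. Unset Strict Implicit. Unset Printing Implicit Defensive.
Import Order.TTheory GRing.Theory Num.Theory.
Local Open Scope ring_scope.

Section Defs.
Variable F : fieldType.

Definition ps := nat -> F.
Definition ps0 : ps := fun _ => 0.
Definition ps1 : ps := fun j => if j == 0%N then 1 else 0.
Definition psadd (a b : ps) : ps := fun j => a j + b j.
Definition psmul (a b : ps) : ps :=
  fun j => \sum_(i < j.+1) a i * b (j - i)%N.
Definition psprod (s : seq ps) : ps := foldr psmul ps1 s.
Definition pssum (s : seq ps) : ps := foldr psadd ps0 s.

(* ---------- colourings: psi k n = psi^k(n) (index k = 0 unused) ---------- *)
Definition colouring (psi : nat -> int -> ps) : Prop :=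
  (forall (k : nat) (n : int), (1 <= k)%N ->
                psi k n 0%N = (k%:Z * (n - k%:Z + 1))%:~R) /\
  (forall (n : nat) (j : nat), psi n.+1 n%:Z j = 0) /\
  (forall (k n : nat) (j : nat), (1 <= k)%N ->
                psi (n + k).+1 n%:Z j = psi k (- n%:Z - 2) j).

(* ---------- the module V_h(n,psi) ----------
   A vector is given by its coefficients: v j i = coefficient of h^j b_i. *)
Definition vec := nat -> nat -> F.
Definition bvec (k : nat) : vec := fun j i => if (j == 0%N) && (i == k) then 1 else 0.
Definition svec (c : ps) (l : nat) : vec := fun j i => if i == l then c j else 0.

Inductive gen := GH | GXm | GXp.

Definition actGen (psi : nat -> int -> ps) (n : int) (g : gen) (v : vec) : vec :=
  match g with
  | GH  => fun j i => (n - 2 * i%:Z)%:~R * v j i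
  | GXm => fun j i => if i is i'.+1 then v j i' else 0
  | GXp => fun j i => \sum_(m < j.+1) psi i.+1 n m * v (j - m)%N i.+1
  end.

(* a word [:: g1; ...; gr] stands for the product g1 g2 ... gr *)
Definition actWord psi n (w : seq gen) (v : vec) : vec :=
  foldr (actGen psi n) v w.

(* an element of the free algebra k<H,X^-,X^+>: a finite linear combination
   of words; elements of U_h are formal series sum_m u_m h^m of those. *)
Definition fpoly := seq (F * seq gen).
Definition fseries := nat -> fpoly.

Definition actPoly psi n (u : fpoly) (v : vec) : vec :=
  fun j i => \sum_(t <- u) t.1 * actWord psi n t.2 v j i.

Definition actSeries psi n (u : fseries) (v : vec) : vec :=
  fun j i => \sum_(m < j.+1) actPoly psi n (u m) v (j - m)%N i.

(* ---------- U_h(psi) ----------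
   An element of U_h(psi) is recorded by its action on every basis vector
   b_k of every V_h(n,psi): M n k = x.b_k in V_h(n,psi). *)
Definition Mat := int -> nat -> vec.

Definition matOf psi (u : fseries) : Mat := fun n k => actSeries psi n u (bvec k).

Definition inUh psi (M : Mat) : Prop :=
  exists u : fseries, forall n k j i, matOf psi u n k j i = M n k j i.

Definition mat_eq (M N : Mat) : Prop := forall n k j i, M n k j i = N n k j i.

(* M - N lies in h^m U_h(psi) *)
Definition in_hpow psi (m : nat) (M N : Mat) : Prop :=
  exists Y, inUh psi Y /\
    forall n k j i, M n k j i - N n k j i = if (j < m)%N then 0 else Y n k (j - m)%N i.

Definition hconv psi (S : nat -> Mat) (x : Mat) : Prop :=
  forall m, exists N0, forall N, (N0 <= N)%N -> in_hpow psi m (S N) x.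

(* xi a n = xi^a(n); P a m is the polynomial with P a m (n) = xi^a_m(n) *)
Definition regular_with (dp : nat) (xi : nat -> int -> ps) (P : nat -> nat -> {poly F}) :=
  (forall a m n, (dp <= a)%N -> xi a n m = (P a m).[n%:~R]) /\
  (forall m, exists D, forall a, (dp <= a)%N -> (size (P a m) <= D)%N).

Definition summable (dp : nat) (xi : nat -> int -> ps) :=
  forall m, exists A, forall a n, (A <= a)%N -> (dp <= a)%N -> xi a n m = 0.

Definition ltimes (psi : nat -> int -> ps) (xi : nat -> int -> ps) (dp k : nat) (n : int) : ps :=
  pssum [seq psmul (psprod [seq psi b n | b <- iota (k - a).+1 a])
                   (xi a (n - 2 * k%:Z)) | a <- iota dp (k.+1 - dp)].

(* the term (X^-)^(a-d) (X^+)^a xi^a(H), with xi^a(H) = sum_m P a m (H) h^m *)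
Definition term (d : int) (P : nat -> nat -> {poly F}) (a : nat) : fseries :=
  fun m => [seq ((P a m)`_i, nseq `|a%:Z - d|%N GXm ++ nseq a GXp ++ nseq i GH)
           | i <- iota 0 (size (P a m))].

Definition partial (d : int) (dp : nat) P (N : nat) : fseries :=
  fun m => flatten [seq term d P a m | a <- iota dp (N - dp)].

(* x is of degree d, with psi(x)^k(n) = c k n *)
Definition degree_coeffs (d : int) (dp : nat) (x : Mat) (c : nat -> int -> ps) :=
  forall n k, 
    ((k < dp)%N -> forall j i, x n k j i = 0) /\
    ((dp <= k)%N -> forall j i, x n k j i = svec (c k n) `|k%:Z - d|%N j i).

Definition of_degree d dp x := exists c, degree_coeffs d dp x c.

End Defs.

Definition dplus (d : int) : nat := `|Num.max d 0|%N.

(* Main.v *)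
Require Import Defs.
From HB Require Import structures.
From mathcomp Require Import all_boot all_order all_algebra zify.
From Stdlib Require Import FunctionalExtensionality IndefiniteDescription.
Set Implicit Arguments. Unset Strict Implicit. Unset Printing Implicit Defensive.
Import Order.TTheory GRing.Theory Num.Theory.
Local Open Scope ring_scope.

Section Aux.
Variable F : fieldType.
Implicit Types (a b c : ps F).

Definition Tr (J : nat) (a : ps F) : {poly F} := \poly_(i < J.+1) a i.

Lemma psmul_coef a b j J : (j <= J)%N -> psmul a b j = (Tr J a * Tr J b)`_j.
Proof.
move=> hj; rewrite /psmul coefM; apply: eq_bigr => [[i hi]] _ /=.
rewrite !coef_poly; have -> : (i < J.+1)%N by rewrite (leq_trans hi) // ltnS.
by rewrite ltnS (leq_trans (leq_subr _ _) hj).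
Qed.

Lemma psmulC a b : psmul a b = psmul b a.
Proof. by apply: functional_extensionality => j; rewrite !(psmul_coef _ _ (leqnn j)) mulrC. Qed.

Lemma psmulA a b c : psmul a (psmul b c) = psmul (psmul a b) c.
Proof.
apply: functional_extensionality => j.
have E : forall p q : {poly F}, (forall i, (i <= j)%N -> p`_i = q`_i) ->
  forall r : {poly F}, (p * r)`_j = (q * r)`_j /\ (r * p)`_j = (r * q)`_j.
  move=> p q hpq r; rewrite !coefM; split; apply: eq_bigr => [[i hi]] _ /=.
    by rewrite hpq.
  by rewrite hpq // leq_subr.
rewrite (psmul_coef _ _ (leqnn j)) [in RHS](psmul_coef _ _ (leqnn j)).
have h1 : forall i, (i <= j)%N -> (Tr j (psmul b c))`_i = (Tr j b * Tr j c)`_i.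
  by move=> i hi; rewrite coef_poly ltnS hi (psmul_coef _ _ hi).
have h2 : forall i, (i <= j)%N -> (Tr j (psmul a b))`_i = (Tr j a * Tr j b)`_i.
  by move=> i hi; rewrite coef_poly ltnS hi (psmul_coef _ _ hi).
rewrite (proj2 (E _ _ h1 _)) (proj1 (E _ _ h2 _)) mulrA //.
Qed.

Lemma psmul1 a : psmul a (ps1 F) = a.
Proof.
apply: functional_extensionality => j; rewrite /psmul big_ord_recr /= subnn /= mulr1.
rewrite big1 ?add0r // => [[i hi]] _ /=; rewrite /ps1.
by rewrite subn_eq0 leqNgt hi mulr0.
Qed.

Lemma psmulZ a b (s : F) : psmul a (fun j => s * b j) = fun j => s * psmul a b j.
Proof.
apply: functional_extensionality => j; rewrite /psmul mulr_sumr.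
by apply: eq_bigr => i _; rewrite mulrCA.
Qed.

Lemma foldr_psmul (s : seq (ps F)) c : foldr (@psmul F) c s = psmul (psprod s) c.
Proof.
elim: s => [|x s IH] /=; first by rewrite psmulC psmul1.
by rewrite IH psmulA.
Qed.

Lemma pssum_map (T : Type) (f : T -> ps F) (s : seq T) j :
  pssum [seq f x | x <- s] j = \sum_(x <- s) f x j.
Proof. by elim: s => [|x s IH]; rewrite ?big_nil ?big_cons //= /psadd IH. Qed.

End Aux.

Section Act.
Variable F : fieldType.
Variable psi : nat -> int -> ps F.
Variable n : int.
Definition vz : vec F := fun _ _ => 0.

Lemma actG_z g : actGen psi n g vz = vz.
Proof.
apply: functional_extensionality => j; apply: functional_extensionality => i.
case: g => /=; rewrite /vz ?mulr0 //; first by case: i.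
by rewrite big1 // => m _; rewrite mulr0.
Qed.

Lemma actW_z w : actWord psi n w vz = vz.
Proof. by elim: w => [|g w IH] //=; rewrite IH actG_z. Qed.

Lemma actW_cat w1 w2 v : actWord psi n (w1 ++ w2) v = actWord psi n w1 (actWord psi n w2 v).
Proof. by rewrite /actWord foldr_cat. Qed.

Lemma actG_H c l : actGen psi n GH (svec c l) = svec (fun j => (n - 2 * l%:Z)%:~R * c j) l.
Proof.
apply: functional_extensionality => j; apply: functional_extensionality => i.
rewrite /= /svec; case: eqP => [->|] //; by rewrite mulr0.
Qed.

Lemma actG_Xm c l : actGen psi n GXm (svec c l) = svec c l.+1.
Proof.
apply: functional_extensionality => j; apply: functional_extensionality => i.
by case: i.
Qed.

Lemma actG_Xp c l : actGen psi n GXp (svec c l.+1) = svec (psmul (psi l.+1 n) c) l.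
Proof.
apply: functional_extensionality => j; apply: functional_extensionality => i.
rewrite /= /svec eqSS; case: eqP => [->|] //.
by rewrite big1 // => m _; rewrite mulr0.
Qed.

Lemma actG_Xp0 c : actGen psi n GXp (svec c 0) = vz.
Proof.
apply: functional_extensionality => j; apply: functional_extensionality => i.
by rewrite /= /svec big1 // => m _; rewrite mulr0.
Qed.

Arguments actGen : simpl never.
Lemma actW_H i c l : actWord psi n (nseq i GH) (svec c l)
   = svec (fun j => ((n - 2 * l%:Z)%:~R) ^+ i * c j) l.
Proof.
elim: i => [|i IH].
  by congr svec; apply: functional_extensionality => j; rewrite mul1r.
change (actGen psi n GH (actWord psi n (nseq i GH) (svec c l)) = svec (fun j => ((n - 2 * l%:Z)%:~R) ^+ i.+1 * c j) l).
rewrite IH actG_H; congr svec; apply: functional_extensionality => j.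
by rewrite exprS mulrA.
Qed.

Lemma actW_Xm e c l : actWord psi n (nseq e GXm) (svec c l) = svec c (l + e).
Proof. by elim: e => [|e IH] /=; rewrite ?addn0 // IH actG_Xm addnS. Qed.

Lemma actW_Xp a c l : (a <= l)%N -> actWord psi n (nseq a GXp) (svec c l)
   = svec (foldr (@psmul F) c [seq psi b n | b <- iota (l - a).+1 a]) (l - a).
Proof.
elim: a => [|a IH] ha /=; first by rewrite subn0.
rewrite IH ?(ltnW ha) //.
have E : (l - a = (l - a.+1).+1)%N by rewrite subnS prednK // subn_gt0.
by rewrite E actG_Xp -E.
Qed.

Lemma actW_Xp_big a c l : (l < a)%N -> actWord psi n (nseq a GXp) (svec c l) = vz.
Proof.
move=> ha; rewrite -(subnK ha) nseqD actW_cat /= actW_Xp // subnn actG_Xp0.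
by rewrite actW_z.
Qed.

End Act.
Arguments actGen : simpl never.

Section Term.
Variable F : fieldType.
Variable psi : nat -> int -> ps F.
Variable n : int.
Variable d : int.
Variable P : nat -> nat -> {poly F}.

Lemma bvecE k : bvec F k = svec (ps1 F) k.
Proof.
apply: functional_extensionality => j; apply: functional_extensionality => i.
by rewrite /bvec /svec /ps1; case: (i == k); rewrite ?andbT ?andbF.
Qed.

Lemma actW_Xm_pt e c l j i : actWord psi n (nseq e GXm) (svec c l) j i = svec c (l+e) j i.
Proof. exact: (f_equal (fun f => f j i) (actW_Xm psi n e c l)). Qed.
Lemma actW_z_pt w j i : actWord psi n w (vz F) j i = 0.
Proof. exact: (f_equal (fun f => f j i) (actW_z psi n w)). Qed.

Definition G k a := psprod [seq psi b n | b <- iota (k - a).+1 a].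

Lemma actPoly_term a m k j idx : (a <= k)%N ->
  actPoly psi n (term d P a m) (bvec F k) j idx =
  if idx == (k - a + `|a%:Z - d|)%N then
     (P a m).[(n - 2 * k%:Z)%:~R] * G k a j else 0.
Proof.
move=> ha; rewrite /actPoly /term big_map.
under eq_bigr => i _.
  rewrite /= bvecE !actW_cat actW_H actW_Xp //. rewrite actW_Xm_pt foldr_psmul psmulZ psmul1.
  over.
rewrite /svec /=; case: eqP => _; last by rewrite big1 // => i _; rewrite mulr0.
rewrite horner_coef mulr_suml -(big_mkord xpredT (fun i => (P a m)`_i * _ ^+ i * _)).
rewrite /index_iota subn0; apply: eq_bigr => i _; rewrite mulrA //.
Qed.

Lemma actPoly_term_big a m k j idx : (k < a)%N ->
  actPoly psi n (term d P a m) (bvec F k) j idx = 0.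
Proof.
move=> ha; rewrite /actPoly /term big_map big1 // => i _.
by rewrite /= bvecE !actW_cat actW_H actW_Xp_big // actW_z_pt /vz mulr0.
Qed.

Lemma matOf_term a k j idx :
  matOf psi (term d P a) n k j idx =
  if (a <= k)%N then
    (if idx == (k - a + `|a%:Z - d|)%N then
      psmul (G k a) (fun m => (P a m).[(n - 2 * k%:Z)%:~R]) j else 0)
  else 0.
Proof.
rewrite /matOf /actSeries; case: leqP => ha.
  under eq_bigr => m _ do rewrite actPoly_term //.
  case: eqP => _; last by rewrite big1.
  rewrite psmulC /psmul; by [].
by rewrite big1 // => m _; rewrite actPoly_term_big.
Qed.

Lemma matOf_partial dp N k j idx :
  matOf psi (partial d dp P N) n k j idx =
  \sum_(a <- iota dp (N - dp)) matOf psi (term d P a) n k j idx.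
Proof.
rewrite /matOf /actSeries [RHS]exchange_big /=; apply: eq_bigr => m _.
by rewrite /actPoly /partial big_flatten big_map.
Qed.

End Term.

Section Hpow.
Variable F : fieldType.
Variable psi : nat -> int -> ps F.

Lemma actPoly_catN n (u w : fpoly F) v j i :
  actPoly psi n (u ++ [seq (- x.1, x.2) | x <- w]) v j i
  = actPoly psi n u v j i - actPoly psi n w v j i.
Proof.
rewrite /actPoly big_cat big_map /= -sumrN; congr (_ + _).
by apply: eq_bigr => x _; rewrite mulNr.
Qed.

Lemma hpow_lemma (s t : fseries F) M :
  (forall m, (m < M)%N -> s m = t m) -> in_hpow psi M (matOf psi s) (matOf psi t).
Proof.
move=> Hst.
exists (matOf psi (fun m' => s (m' + M)%N ++ [seq (- x.1, x.2) | x <- t (m' + M)%N])).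
split; first by exists (fun m' => s (m' + M)%N ++ [seq (- x.1, x.2) | x <- t (m' + M)%N]).
move=> n k j i; rewrite /matOf /actSeries -sumrB.
case: ltnP => hj.
  rewrite big1 // => [[m hm]] _ /=; rewrite Hst ?subrr //.
  by rewrite (leq_trans hm).
under [RHS]eq_bigr => m _ do rewrite actPoly_catN.
rewrite -(big_mkord (fun _ => true) (fun m : nat => actPoly psi n (s m) (bvec F k) (j - m)%N i - actPoly psi n (t m) (bvec F k) (j - m)%N i)).
rewrite (@big_cat_nat _ _ _ M) //=; last by rewrite (leq_trans hj).
rewrite big_nat_cond big1 ?add0r; last first.
  by move=> m /andP [/andP [_ hm] _]; rewrite Hst ?subrr.
rewrite -{1}(add0n M) big_addn big_mkord.
have -> : (j.+1 - M = (j - M).+1)%N by rewrite subSn.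
by apply: eq_bigr => m _; rewrite subnDA subnAC.
Qed.

End Hpow.

Lemma dp_le (d : int) (a : nat) : (dplus d <= a)%N -> d <= a%:Z.
Proof. rewrite /dplus. lia. Qed.
Lemma idx_eq (d : int) (a k : nat) : (dplus d <= a)%N -> (a <= k)%N ->
  (k - a + `|a%:Z - d|)%N = `|k%:Z - d|%N.
Proof. rewrite /dplus. lia. Qed.

Lemma natr_inj0 (F : fieldType) (charF0 : [pchar F] =i pred0) :
  injective (fun i : nat => (i%:R : F)).
Proof.
have H := (pcharf0P F).1 charF0.
have key : forall i j : nat, (i < j)%N -> (i%:R : F) <> j%:R.
  move=> i j hij e; have := H (j - i)%N.
  by rewrite natrB ?(ltnW hij) // -e subrr eqxx subn_eq0 leqNgt hij.
move=> i j /= e; case: (ltngtP i j) => // h.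
  by case: (key _ _ h).
by case: (key _ _ h).
Qed.

Lemma poly_zero (F : fieldType) (charF0 : [pchar F] =i pred0) (p : {poly F}) :
  (forall i : nat, p.[i%:R] = 0) -> p = 0.
Proof.
move=> h; apply: (@roots_geq_poly_eq0 _ p [seq i%:R | i <- iota 0 (size p)]).
- by apply/allP => x /mapP [i _ ->]; rewrite /root h.
- by rewrite map_inj_uniq ?iota_uniq //; apply: natr_inj0.
- by rewrite size_map size_iota.
Qed.

Theorem mainTheorem5 (F : fieldType) (charF0 : [pchar F] =i pred0)
  (psi : nat -> int -> ps F) (Hpsi : colouring psi)
  (d : int) (xi : nat -> int -> ps F) (P : nat -> nat -> {poly F})
  (Hreg : regular_with (dplus d) xi P) (Hsum : summable (dplus d) xi) :
  let dp := dplus d in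
  exists x : Mat F,
    [/\ inUh psi x,
        hconv psi (fun N => matOf psi (partial d dp P N)) x,
        (forall x', inUh psi x' ->
           hconv psi (fun N => matOf psi (partial d dp P N)) x' -> mat_eq x' x),
        of_degree d dp x &
        (forall c, degree_coeffs d dp x c ->
           forall (k : nat) (n : int) (j : nat), (dp <= k)%N ->
             c k n j = ltimes psi xi dp k n j)].
Proof.
move=> dp.
pose Af m := proj1_sig (constructive_indefinite_description _ (Hsum m)).
have HAf : forall m a n, (Af m <= a)%N -> (dp <= a)%N -> xi a n m = 0.
  by move=> m; exact: (proj2_sig (constructive_indefinite_description _ (Hsum m))).
pose Bm m := maxn (Af m) dp.
have Pz : forall m a, (Bm m <= a)%N -> P a m = 0.
  move=> m a; rewrite geq_max => /andP [h1 h2]; apply: poly_zero => // i.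
  by rewrite -(Hreg.1 a m i h2) (HAf m a i h1 h2).
have flat0 : forall m L B, (Bm m <= B)%N ->
    flatten [seq term d P a m | a <- iota B L] = [::].
  move=> m; elim=> [|L IH] B hB //=.
  by rewrite IH ?(leq_trans hB) // /term Pz ?size_poly0.
pose u : fseries F := fun m => partial d dp P (Bm m) m.
have stable : forall m N, (Bm m <= N)%N -> partial d dp P N m = u m.
  move=> m N hN; rewrite /u /partial.
  have hB : (dp <= Bm m)%N by rewrite leq_maxr.
  have -> : (N - dp = (Bm m - dp) + (N - Bm m))%N.
    by lia.
  by rewrite iotaD map_cat flatten_cat subnKC // (flat0 m _ (Bm m)) // cats0.
pose x := matOf psi u.
have conv : hconv psi (fun N => matOf psi (partial d dp P N)) x.
  move=> M; exists (\max_(m < M) Bm m) => N hN.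
  apply: hpow_lemma => m hm; apply: stable; apply: leq_trans hN.
  by apply: (@leq_bigmax_cond _ _ (fun m : 'I_M => Bm m) (Ordinal hm)).
have xval : forall n k j i, x n k j i =
    \sum_(a <- iota dp (k.+1 - dp)) matOf psi (term d P a) n k j i.
  move=> n k j i.
  pose N := maxn (\max_(m < j.+1) Bm m) k.+1.
  have [Y [_ HY]] : in_hpow psi j.+1 (matOf psi (partial d dp P N)) x.
    apply: hpow_lemma => m hm; apply: stable; apply: leq_trans (leq_maxl _ _).
    by apply: (@leq_bigmax_cond _ _ (fun m : 'I_j.+1 => Bm m) (Ordinal hm)).
  have := HY n k j i; rewrite ltnSn => /eqP; rewrite subr_eq0 => /eqP <-.
  rewrite matOf_partial.
  have zero : forall a, (k < a)%N -> matOf psi (term d P a) n k j i = 0.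
    by move=> a ha; rewrite matOf_term leqNgt ha.
  case: (leqP dp k.+1) => hdk.
    have -> : (N - dp = (k.+1 - dp) + (N - k.+1))%N.
      by rewrite /N; lia.
    rewrite iotaD big_cat /= subnKC // [X in _ + X]big1_seq ?addr0 //.
    move=> a /andP [_]; rewrite mem_iota => /andP [ha _]; exact: zero.
  have -> : (k.+1 - dp = 0)%N by apply/eqP; rewrite subn_eq0 ltnW.
  rewrite big_nil big1_seq // => a /andP [_]; rewrite mem_iota => /andP [ha _].
  by apply: zero; lia.
have xval2 : forall n k j i, (dp <= k)%N ->
    x n k j i = svec (ltimes psi xi dp k n) `|k%:Z - d|%N j i.
  move=> n k j i hk; rewrite xval /svec /ltimes pssum_map.
  case: eqP => hi.
    apply: eq_big_seq => a; rewrite mem_iota subnKC ?(leqW hk) // => /andP [h1 h2].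
    rewrite matOf_term -ltnS h2 idx_eq // -hi eqxx /G.
    congr psmul; apply: functional_extensionality => m.
    by rewrite (Hreg.1 a m _ h1).
  rewrite big1_seq // => a /andP [_]; rewrite mem_iota subnKC ?(leqW hk) // => /andP [h1 h2].
  rewrite matOf_term -ltnS h2 idx_eq //; case: eqP => // e.
exists x; split.
- by exists u.
- exact: conv.
- move=> x' _ conv' n k j i.
  have [N1 H1] := conv' j.+1; have [N2 H2] := conv j.+1.
  have [Y1 [_ HY1]] := H1 (N1 + N2)%N (leq_addr _ _).
  have [Y2 [_ HY2]] := H2 (N1 + N2)%N (leq_addl _ _).
  have := HY1 n k j i; have := HY2 n k j i; rewrite ltnSn.
  by move=> /eqP; rewrite subr_eq0 => /eqP <- /eqP; rewrite subr_eq0 => /eqP <-.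
- exists (fun k n => ltimes psi xi dp k n) => n k; split.
    move=> hk j i; rewrite xval.
    have -> : (k.+1 - dp = 0)%N by apply/eqP; rewrite subn_eq0.
    by rewrite big_nil.
  by move=> hk j i; apply: xval2.
- move=> c Hc k n j hk.
  have := (Hc n k).2 hk j `|k%:Z - d|%N; rewrite xval2 // /svec eqxx.
  by move=> ->.
Qed.
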